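(* For $n\ge 0$, the $(n+1)\times(n+1)$ Hankel matrix $M_n=\left[\binom{i+j}{n}\right]_{0\le i,j\le n}$ is invertible, with inverse $$M_n^{-1}=\left[(-1)^{n-i-j}\binom{n+1}{i+j+1}\right]_{0\le i,j\le n}.$$
   Context: Binomial coefficients $\binom{a}{b}$ with integers $a\ge0$ are taken to be $0$ when $b>a$ or $b<0$. *)

(* Defs.v *)
From HB Require Import structures.
From mathcomp Require Import all_boot all_order all_algebra.
Set Implicit Arguments. Unset Strict Implicit. Unset Printing Implicit Defensive.
Import GRing.Theory Num.Theory.
Local Open Scope ring_scope.

Definition hankelM (n : nat) : 'M[int]_n.+1 :=
  \matrix_(i < n.+1, j < n.+1) ('C(i + j, n))%:Z.

(* claimed inverse: [(-1)^(n-i-j) C(n+1, i+j+1)]; since (-1)^(n-i-j) = (-1)^(n+i+j)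
   for integer exponents, we use the nat exponent n+i+j *)
Definition hankelMinv (n : nat) : 'M[int]_n.+1 :=
  \matrix_(i < n.+1, j < n.+1) ((-1) ^+ (n + i + j) * ('C(n.+1, i + j + 1))%:Z).

(* Main.v *)
Require Import Defs.
From HB Require Import structures.
From mathcomp Require Import all_boot all_order all_algebra.
Import GRing.Theory Num.Theory.
Local Open Scope ring_scope.

Definition gs (N a n : nat) : int :=
  \sum_(m < N.+1) (-1) ^+ m * ('C(N, m) * 'C(a + m, n))%:Z.

Lemma gs_rec N a n : gs N.+1 a n = gs N a n - gs N a.+1 n.
Proof.
rewrite /gs big_ord_recl /=.
under eq_bigr => i _ do rewrite /bump /= add1n binS mulnDl PoszD mulrDr.
rewrite big_split /= addrA.
have E1 : \sum_(m < N.+1) (-1) ^+ m * ('C(N, m) * 'C(a + m, n))%:Z =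
   (-1) ^+ 0 * ('C(N.+1, 0) * 'C(a + 0, n))%:Z +
   \sum_(i < N.+1) (-1) ^+ i.+1 * ('C(N, i.+1) * 'C(a + i.+1, n))%:Z.
  rewrite big_ord_recl /= !bin0.
  rewrite [in RHS]big_ord_recr /= (bin_small (ltnSn N)) mul0n mulr0 addr0.
  by congr (_ + _).
rewrite -E1; congr (_ + _).
rewrite -sumrN; apply: eq_bigr => i _.
by rewrite exprS mulN1r mulNr addnS addSn.
Qed.
From mathcomp Require Import ring.
Lemma gs_val N a n : gs N a n = (-1) ^+ N * (if (N <= n)%N then 'C(a, n - N) else 0)%:Z.
Proof.
elim: N a => [|N IH] a.
  by rewrite /gs big_ord1 /= subn0 bin0 mul1n addn0 expr0 !mul1r.
rewrite gs_rec !IH.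
case: (ltngtP N n) => H.
- rewrite -(subnSK H) binS PoszD exprS; ring.
- ring.
- rewrite H subnn !bin0; ring.
Qed.
From mathcomp Require Import zify.
Lemma sgn_eq (a b c : nat) : (a + c.*2 = b)%N -> (-1) ^+ a = (-1) ^+ b :> int.
Proof.
move=> <-; rewrite -(signr_odd _ (a + _)) oddD odd_double addbF signr_odd //.
Qed.

Definition T (n i j : nat) : int :=
  \sum_(k < n.+1) ('C(i + k, n))%:Z * ((-1) ^+ (n + k + j) * ('C(n.+1, k + j + 1))%:Z).

Lemma T_gt n i j : (i <= n)%N -> (j < i)%N -> T n i j = 0.
Proof.
move=> Hi Hji.
have E : gs n.+1 (i - j - 1) n = (-1) ^+ n.+1 * T n i j.
  rewrite /gs /T mulr_sumr -(big_mkord xpredT (fun m => (-1) ^+ m * ((binomial n.+1 m) * (binomial (i - j - 1 + m) n))%:Z)).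
  rewrite -(big_mkord xpredT (fun k => (-1) ^+ n.+1 * ((binomial (i + k) n)%:Z * ((-1) ^+ (n + k + j) * (binomial n.+1 (k + j + 1))%:Z)))) /=.
  rewrite (@big_cat_nat _ _ _ j.+1) /=; [|lia|lia].
  rewrite big1_seq /= ?add0r; last first.
    move=> m; rewrite mem_index_iota => /andP [_ Hm].
    by rewrite (@bin_small (i - j - 1 + m) n) ?muln0 ?mulr0 //; lia.
  rewrite [in RHS](@big_cat_nat _ _ _ (n.+1 - j)) /=; [|lia|lia].
  rewrite [X in _ = _ + X]big1_seq /= ?addr0; last first.
    move=> k; rewrite mem_index_iota => /andP [Hk _].
    by rewrite (@bin_small n.+1) ?mul0r ?mulr0 //; lia.
  rewrite -{1}(add0n j.+1) big_addn.
  have -> : (n.+2 - j.+1 = n.+1 - j)%N by lia.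
  apply: eq_bigr => k _.
  have -> : (i - j - 1 + (k + j.+1) = i + k)%N by lia.
  rewrite addn1 -addnS PoszM.
  rewrite (@sgn_eq (k + j.+1) (n.+1 + (n + k + j)) n); last by rewrite -addnn; lia.
  rewrite exprD; ring.
move: E; rewrite gs_val ltnn mulr0 => /esym/eqP.
by rewrite mulf_eq0 signr_eq0 /= => /eqP.
Qed.

Lemma T_le n i j : (i <= n)%N -> (j <= n)%N -> (i <= j)%N -> T n i j = (i == j)%:R.
Proof.
move=> Hi Hj Hij.
have Hk : (n - j < n.+1)%N by lia.
rewrite /T (bigD1 (Ordinal Hk)) //= big1 ?addr0; last first.
  move=> k /eqP Hne.
  have Hne' : (nat_of_ord k <> n - j)%N by move=> E; apply: Hne; apply: val_inj.
  case: (ltnP k (n - j)) => Hk2.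
    by rewrite bin_small ?mul0r //; lia.
  by rewrite (@bin_small n.+1) ?mulr0 //; lia.
have -> : (n - j + j + 1 = n.+1)%N by lia.
rewrite binn mulr1.
case: (ltngtP i j) => H; last first.
- rewrite H.
  have -> : (j + (n - j) = n)%N by lia.
  rewrite binn mul1r -(@sgn_eq 0 (n + (n - j) + j) n) //; rewrite -addnn; lia.
- exfalso; lia.
- by rewrite bin_small ?mul0r //; lia.
Qed.

Lemma prod1 n : hankelM n *m hankelMinv n = 1%:M.
Proof.
apply/matrixP => i j; rewrite !mxE.
have -> : \sum_(k < n.+1) hankelM n i k * hankelMinv n k j = T n i j.
  by apply: eq_bigr => k _; rewrite !mxE.
have Hi : (i <= n)%N by rewrite -ltnS ltn_ord.
have Hj : (j <= n)%N by rewrite -ltnS ltn_ord.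
case: (leqP i j) => H.
  by rewrite T_le.
rewrite T_gt //; case: eqP => E //; exfalso; move: H; rewrite E ltnn; done.
Qed.

Theorem lemma3p2 (n : nat) :
  hankelM n \in unitmx /\ invmx (hankelM n) = hankelMinv n.
Proof.
have P := prod1 n.
have [U _] := mulmx1_unit P.
split => //.
by rewrite -[invmx _]mulmx1 -P mulmxA mulVmx // mul1mx.
Qed.
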